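(* Let $m\ge1$ be a fixed integer and let $G_n$ be the preferential attachment graph with parameter $m$. With probability $1-o(1)$ as $n\to\infty$, every vertex $i\in[n]$ with $d_n(i)\ge n^{1/2}/\log^{1/20}n$ satisfies $i\le n/\log^{1/39}n$.
   Context: Preferential attachment graph $G_n$ (Bollobás–Riordan construction): choose $x_1,\dots,x_{2mn}$ independently and uniformly from $[0,1]$; for $i=1,\dots,mn$ let $\{\ell_i,r_i\}=\{x_{2i-1},x_{2i}\}$ with $\ell_i<r_i$. Sort the $r_i$ as $R_1<\dots<R_{mn}$, put $R_0=0$, $W_j=R_{mj}$, $I_j=(W_{j-1},W_j]$. $G_n$ is the multigraph on $[n]$ with one edge $\{x,y\}$ ($x\le y$) for each pair with $\ell_i\in I_x$, $r_i\in I_y$. $d_n(i)$ is the degree of vertex $i$ in $G_n$. *)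

(* Defs.v *)
From Stdlib Require Import Reals.
From mathcomp Require Import all_boot all_fingroup.
Set Implicit Arguments. Unset Strict Implicit. Unset Printing Implicit Defensive.

(* A sample is x : nat -> nat; x k (k = 0 .. 2mn-1) plays the role of x_{k+1}.
   Pair i (i = 0 .. mn-1, paper index i+1) is {x (2i), x (2i+1)}. *)
Definition lft (x : nat -> nat) (i : nat) : nat := minn (x i.*2) (x i.*2.+1).
Definition rgt (x : nat -> nat) (i : nat) : nat := maxn (x i.*2) (x i.*2.+1).

(* The sorted right endpoints R_1 < ... < R_mn, with R_0 = 0. *)
Definition Rsorted (m n : nat) (x : nat -> nat) : seq nat :=
  sort leq [seq rgt x i | i <- iota 0 (m * n)].
Definition Rv (m n : nat) (x : nat -> nat) (j : nat) : nat :=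
  if j is j'.+1 then nth 0 (Rsorted m n x) j' else 0.
Definition W (m n : nat) (x : nat -> nat) (j : nat) : nat := Rv m n x (m * j).
Definition inI (m n : nat) (x : nat -> nat) (v j : nat) : bool :=
  (W m n x j.-1 < v <= W m n x j)%N.

(* degree of vertex i in the multigraph G_n: each pair gives one edge
   {vertex of l_k, vertex of r_k}; a loop contributes 2. *)
Definition deg (m n : nat) (x : nat -> nat) (i : nat) : nat :=
  (\sum_(k < m * n) (inI m n x (lft x k) i + inI m n x (rgt x k) i))%N.

(* Ranks: for a permutation s of 'I_(2mn), the sample x_{k+1} := s(k) + 1.
   The graph depends only on the relative order of the x's, and the order
   pattern of 2mn i.i.d. uniform [0,1] variables is a uniform permutation
   (ties have probability 0). *)
Definition rk (N : nat) (s : 'S_N) (k : nat) : nat :=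
  oapp (fun o : 'I_N => (s o).+1) 0%N (insub k).

Definition Rleb (a b : R) : bool := if Rle_dec a b then true else false.

Definition deg_thr (n : nat) : R := Rdiv (sqrt (INR n)) (Rpower (ln (INR n)) (Rinv (IZR 20))).
Definition pos_thr (n : nat) : R := Rdiv (INR n) (Rpower (ln (INR n)) (Rinv (IZR 39))).

Definition bad (m n : nat) (s : 'S_(2 * m * n)) : bool :=
  [exists i : 'I_n.+1,
     [&& (0 < i)%N,
         Rleb (deg_thr n) (INR (deg m n (rk s) i))
       & ~~ Rleb (INR i) (pos_thr n)]].

Definition prob_bad (m n : nat) : R :=
  Rdiv (INR #|[set s : 'S_(2 * m * n) | bad s]|) (INR #|[set: 'S_(2 * m * n)]|).

(* Main.v *)
Require Import Defs.
From Stdlib Require Import Reals Lra ZArith.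
From mathcomp Require Import all_boot all_fingroup zify.
Set Implicit Arguments. Unset Strict Implicit. Unset Printing Implicit Defensive.
Local Open Scope nat_scope.

Definition pn (k : nat) : nat := if odd k then k.-1 else k.+1.

Lemma pn_lt N k : ~~ odd N -> k < N -> pn k < N.
Proof.
move=> hN hk; rewrite /pn; case: ifP => hk2; first by lia.
case: (ltngtP k.+1 N) => // h; first by lia.
by move: hN; rewrite -h /= hk2.
Qed.

Lemma pnK k : pn (pn k) = k.
Proof.
rewrite /pn; case hk: (odd k).
- case: k hk => [|k] //= hk; by rewrite (negbTE hk).
- by rewrite /= hk.
Qed.

Lemma pn_neq k : pn k != k.
Proof. rewrite /pn; case: ifP => h; last by lia. by case: k h => //= k _; lia. Qed.

Definition pidx N (k : 'I_N) : 'I_N := insubd k (pn k).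

Lemma pidxE N (k : 'I_N) : ~~ odd N -> val (pidx k) = pn k.
Proof. by move=> hN; rewrite /pidx val_insubd pn_lt. Qed.

Lemma pidxK N (k : 'I_N) : ~~ odd N -> pidx (pidx k) = k.
Proof. by move=> hN; apply: val_inj; rewrite !pidxE // pnK. Qed.

Lemma pidx_neq N (k : 'I_N) : ~~ odd N -> pidx k != k.
Proof. by move=> hN; rewrite -(inj_eq val_inj) pidxE // pn_neq. Qed.

Definition pv N (s : 'S_N) (v : 'I_N) : 'I_N := s (pidx ((s^-1)%g v)).

Lemma pvK N (s : 'S_N) v : ~~ odd N -> pv s (pv s v) = v.
Proof. by move=> hN; rewrite /pv permK pidxK // permKV. Qed.

Lemma pv_neq N (s : 'S_N) v : ~~ odd N -> pv s v != v.
Proof.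
move=> hN; apply/eqP => h.
have : (s^-1)%g (pv s v) = (s^-1)%g v by rewrite h.
by rewrite /pv permK => /eqP; rewrite (negbTE (pidx_neq _ hN)).
Qed.

Lemma pv_tperm N (s : 'S_N) u w x :
  pv (s * tperm u w)%g x = tperm u w (pv s (tperm u w x)).
Proof. by rewrite /pv invMg permM !permM tpermV. Qed.

Lemma card_dep (A B : finType) (P : pred A) (Q : A -> pred B) :
  #|[set t : A * B | P t.1 && Q t.1 t.2]| = \sum_(x | P x) #|[set y | Q x y]|.
Proof.
rewrite -sum1dep_card.
rewrite (eq_bigr (fun x => \sum_(y | Q x y) 1)); last by move=> x _; rewrite sum1dep_card.
by rewrite pair_big_dep.
Qed.

Definition inW (a K : nat) N (x : 'I_N) := (a <= x) && (x < a + K).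
Definition cntS N a K (s : 'S_N) := [set x : 'I_N | inW a K x && (pv s x < a)].
Definition intS N a K (s : 'S_N) := [set x : 'I_N | inW a K x && inW a K (pv s x)].
Definition Ycls N a K c j :=
  [set s : 'S_N | (#|intS a K s| <= c.*2) && (#|cntS a K s| == j)].

Lemma sw_pv N a K (s : 'S_N) (v u x : 'I_N) : ~~ odd N ->
  inW a K v -> ~~ inW a K (pv s v) -> u < a -> ~~ inW a K (pv s u) -> inW a K x ->
  pv (s * tperm u (pv s v))%g x = if x == v then u else pv s x.
Proof.
move=> hN hv hw hu hpu hx.
rewrite pv_tperm.
have xu : x != u by apply/eqP => e; move: hx; rewrite /inW e; lia.
have xw : x != pv s v by apply/eqP => e; move: hw; rewrite -e hx.
have e1 : u != x by rewrite eq_sym.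
have e2 : pv s v != x by rewrite eq_sym.
rewrite (tpermD e1 e2).
case: eqP => [->|/eqP xv]; first by rewrite tpermR.
have h1 : pv s x != pv s v.
  by apply/eqP => e; move: (congr1 (pv s) e); rewrite !pvK // => /eqP; rewrite (negbTE xv).
have h2 : pv s x != u.
  by apply/eqP => e; move: hpu; rewrite -e pvK // hx.
have e3 : u != pv s x by rewrite eq_sym.
have e4 : pv s v != pv s x by rewrite eq_sym.
by rewrite (tpermD e3 e4).
Qed.

Lemma sum_int lo hi N : \sum_(i < N) ((lo <= i) && (i < hi) : nat) = minn N hi - lo.
Proof.
elim: N => [|N IH]; first by rewrite big_ord0 min0n.
rewrite big_ord_recr /= IH.
case: (leqP lo N) => h1; case: (ltnP N hi) => h2 /=; lia.
Qed.

Lemma card_int N lo hi : hi <= N -> #|[set x : 'I_N | (lo <= x) && (x < hi)]| = hi - lo.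
Proof.
move=> hN; rewrite -sum1dep_card big_mkcond /=.
rewrite (eq_bigr (fun i : 'I_N => ((lo <= i) && (i < hi) : nat))); last by move=> i _; case: ifP.
rewrite sum_int; lia.
Qed.

Lemma cardU_le (T : finType) (A B : {set T}) : #|A :|: B| <= #|A| + #|B|.
Proof. rewrite cardsU; lia. Qed.

Definition vld N a K (s : 'S_N) (p : 'I_N * 'I_N) :=
  [&& inW a K p.1, ~~ inW a K (pv s p.1), a <= pv s p.1, p.2 < a & ~~ inW a K (pv s p.2)].

Lemma sw_sets N a K (s : 'S_N) v u : ~~ odd N -> vld a K s (v, u) ->
  [/\ cntS a K (s * tperm u (pv s v))%g = v |: cntS a K s,
      intS a K (s * tperm u (pv s v))%g = intS a K s &
      v \notin cntS a K s].
Proof.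
move=> hN /and5P [hv hw hw2 hu hpu]; simpl in hv, hw, hw2, hu, hpu; split.
- apply/setP => x; rewrite !inE.
  case hx: (inW a K x) => /=; last by rewrite orbF; apply/esym/negbTE/eqP => e; move: hx; rewrite e hv.
  rewrite (sw_pv hN hv hw hu hpu hx); case: eqP => //= ->; by rewrite hu.
- apply/setP => x; rewrite !inE.
  case hx: (inW a K x) => //=.
  rewrite (sw_pv hN hv hw hu hpu hx); case: eqP => //= ->.
  rewrite (negbTE hw); apply/negbTE; rewrite /inW; lia.
- by rewrite inE hv /=; lia.
Qed.

Lemma switch N a K c j : ~~ odd N -> a + K <= N ->
  #|Ycls N a K c j| * ((K - j - c.*2) * (a - j)) <= #|Ycls N a K c j.+1| * (j.+1 * N).
Proof.
move=> hN haK.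
set T := [set t : 'S_N * ('I_N * 'I_N) | (t.1 \in Ycls N a K c j) && vld a K t.1 t.2].
set T' := [set t : 'S_N * ('I_N * 'I_N) | (t.1 \in Ycls N a K c j.+1) && (t.2.1 \in cntS a K t.1)].
pose f (t : 'S_N * ('I_N * 'I_N)) := ((t.1 * tperm t.2.2 (pv t.1 t.2.1))%g, (t.2.1, pv t.1 t.2.1)).
have finj : {in T &, injective f}.
  move=> [s1 [v1 u1]] [s2 [v2 u2]]; rewrite !inE /= => /andP [_ h1] /andP [_ h2] [e1 e2 e3].
  subst v2; rewrite /vld /= in h1 h2.
  have hu : u1 = u2.
    case/and5P: (h1) => hv hw _ hu hpu; case/and5P: (h2) => _ hw' _ hu' hpu'.
    have := sw_pv hN hv hw hu hpu hv; rewrite eqxx e1 => <-.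
    by have := sw_pv hN hv hw' hu' hpu' hv; rewrite eqxx.
  subst u2; rewrite e3 in e1.
  by move/mulIg: e1 => ->.
have h1 : #|T| <= #|T'|.
  rewrite -(card_in_imset finj); apply: subset_leq_card; apply/subsetP => t'.
  case/imsetP => [[s [v u]]]; rewrite inE /= => /andP [hY hvld] ->.
  have [e1 e2 e3] := sw_sets hN hvld.
  move: hY; rewrite !inE /= e1 e2 => /andP [-> /eqP hc].
  rewrite cardsU1 e3 hc eqxx /=; case/and5P: hvld => /= hv hw _ hu hpu.
  by rewrite hv (sw_pv hN hv hw hu hpu hv) eqxx hu.
have h2 : #|T'| = #|Ycls N a K c j.+1| * (j.+1 * N).
  rewrite /T' (card_dep (fun s => s \in Ycls N a K c j.+1) (fun s (p : 'I_N * 'I_N) => p.1 \in cntS a K s)).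
  rewrite (eq_bigr (fun _ => j.+1 * N)); first by rewrite sum_nat_const cardsE.
  move=> s; rewrite inE => /andP [_ /eqP hc].
  have -> : [set y : 'I_N * 'I_N | y.1 \in cntS a K s] = setX (cntS a K s) setT.
    by apply/setP => y; rewrite !inE andbT.
  by rewrite cardsX cardsT card_ord hc.
have h3 : #|Ycls N a K c j| * ((K - j - c.*2) * (a - j)) <= #|T|.
  rewrite /T (card_dep (fun s => s \in Ycls N a K c j) (fun s (p : 'I_N * 'I_N) => vld a K s p)) -sum_nat_const; apply: leq_sum => s.
  rewrite inE => /andP [hi /eqP hc].
  set V := [set v : 'I_N | [&& inW a K v, ~~ inW a K (pv s v) & a <= pv s v]].
  set U := [set u : 'I_N | (u < a) && ~~ inW a K (pv s u)].
  have -> : [set y | vld a K s y] = setX V U.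
    by apply/setP => y; rewrite !inE /vld -!andbA.
  rewrite cardsX; apply: leq_mul.
  + have hW : #|[set x : 'I_N | (a <= x) && (x < a + K)]| = K by rewrite card_int //; lia.
    have : #|[set x : 'I_N | (a <= x) && (x < a + K)]| <= #|V :|: cntS a K s :|: intS a K s|.
      apply: subset_leq_card; apply/subsetP => x; rewrite !inE => hx.
      rewrite -/(inW a K x) in hx; rewrite hx /=.
      by case: (inW a K (pv s x)); case: leqP.
    move=> hle; have := leq_trans hle (cardU_le _ _).
    have := cardU_le V (cntS a K s); lia.
  + have hP : #|[set x : 'I_N | (0 <= x) && (x < a)]| = a by rewrite card_int //; lia.
    have pinj : injective (pv s) by apply: (can_inj (g := pv s)) => x; rewrite pvK.
    have : #|[set x : 'I_N | (0 <= x) && (x < a)]| <= #|U :|: pv s @: cntS a K s|.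
      apply: subset_leq_card; apply/subsetP => x; rewrite inE /= => hx.
      apply/setUP; case hpx: (inW a K (pv s x)); last by left; rewrite inE hx hpx.
      right; apply/imsetP; exists (pv s x); last by rewrite pvK.
      by rewrite inE hpx pvK.
    move=> hle; have := leq_trans hle (cardU_le _ _).
    rewrite card_imset // hc; lia.
lia.
Qed.

Lemma cardU_disj (T : finType) (A B : {set T}) :
  (forall x, x \in A -> x \in B -> False) -> #|A :|: B| = #|A| + #|B|.
Proof.
move=> H; rewrite cardsU.
suff -> : A :&: B = set0 by rewrite cards0 subn0.
apply/setP => x; rewrite !inE; apply/negbTE/negP => /andP [h1 h2]; exact: H x h1 h2.
Qed.

Lemma cnt_int_bound N a K (s : 'S_N) : ~~ odd N ->
  2 * #|cntS a K s| + #|intS a K s| <= 2 * #|[set v : 'I_N | inW a K v && (pv s v < v)]|.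
Proof.
move=> hN.
set I1 := [set x | (inW a K x && inW a K (pv s x)) && (pv s x < x)].
set I2 := [set x | (inW a K x && inW a K (pv s x)) && (x < pv s x)].
have pinj : injective (pv s) by apply: (can_inj (g := pv s)) => x; rewrite pvK.
have hI : intS a K s = I1 :|: I2.
  apply/setP => x; rewrite /intS !inE.
  have := pv_neq s x hN; rewrite neq_ltn; case: (inW a K x && inW a K (pv s x)) => //=.
have hI2 : I2 = pv s @: I1.
  apply/setP => x; apply/idP/imsetP.
  - rewrite !inE => /andP [/andP [h1 h2] h3]; exists (pv s x); last by rewrite pvK.
    by rewrite !inE pvK //; apply/andP; split => //; apply/andP.
  - move=> [y]; rewrite !inE => /andP [/andP [h1 h2] h3] ->.
    by rewrite pvK //; apply/andP; split => //; apply/andP.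
have e1 : #|intS a K s| = 2 * #|I1|.
  rewrite hI cardU_disj; last by move=> x; rewrite !inE => /andP [_ h1] /andP [_ h2]; lia.
  by rewrite hI2 card_imset // mul2n addnn.
have e2 : #|cntS a K s :|: I1| = #|cntS a K s| + #|I1|.
  apply: cardU_disj => x; rewrite /cntS !inE /inW => /andP [_ h1] /andP [/andP [_ /andP [h2 _]] _]; lia.
have : #|cntS a K s :|: I1| <= #|[set v : 'I_N | inW a K v && (pv s v < v)]|.
  apply: subset_leq_card; apply/subsetP => x; rewrite /cntS !inE.
  case/orP => [/andP [h1 h2] | /andP [/andP [h1 h2] h3]]; rewrite h1 //=.
  move: h1 h2; rewrite /inW; lia.
lia.
Qed.

Lemma card_int2 N lo hi : #|[set x : 'I_N | (lo <= x) && (x < hi)]| = minn N hi - lo.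
Proof.
rewrite -sum1dep_card big_mkcond /=.
rewrite (eq_bigr (fun i : 'I_N => ((lo <= i) && (i < hi) : nat))); last by move=> i _; case: ifP.
by rewrite sum_int.
Qed.

Lemma iter_sw N a K c R : ~~ odd N -> a + K <= N -> forall j,
  #|Ycls N a K c j| * ((K - (j + R) - c.*2) * (a - (j + R))) ^ R <=
  #|Ycls N a K c (j + R)| * ((j + R) * N) ^ R.
Proof.
move=> hN haK; elim: R => [|R IH] j; first by rewrite !expn0 addn0.
have h := switch c j hN haK.
have hA : (K - (j + R.+1) - c.*2) * (a - (j + R.+1)) <= (K - j - c.*2) * (a - j).
  by apply: leq_mul; lia.
have hB : j.+1 * N <= (j + R.+1) * N by apply: leq_mul; lia.
have := IH j.+1; rewrite addSnnS => IH'.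
rewrite !expnS.
set A := (K - (j + R.+1) - c.*2) * (a - (j + R.+1)).
set B := (j + R.+1) * N.
apply: (@leq_trans (#|Ycls N a K c j.+1| * B * A ^ R)).
  rewrite mulnA; apply: leq_mul => //.
  apply: (leq_trans (leq_mul (leqnn _) hA)); apply: (leq_trans h).
  by apply: leq_mul.
have -> : #|Ycls N a K c j.+1| * B * A ^ R = B * (#|Ycls N a K c j.+1| * A ^ R).
  by rewrite mulnAC mulnC.
have -> : #|Ycls N a K c (j + R.+1)| * (B * B ^ R) = B * (#|Ycls N a K c (j + R.+1)| * B ^ R).
  by rewrite mulnCA.
by apply: leq_mul.
Qed.

Lemma sum_pairs (F : nat -> nat) M :
  \sum_(0 <= k < M.*2) F k = \sum_(0 <= p < M) (F p.*2 + F p.*2.+1).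
Proof.
elim: M => [|M IH]; first by rewrite !big_geq.
rewrite doubleS !big_nat_recr //= IH addnA; congr (_ + _ + _).
Qed.

Lemma sum_count (Q : pred nat) M : \sum_(0 <= p < M) (Q p : nat) = count Q (iota 0 M).
Proof.
rewrite -sum1_count [RHS]big_mkcond /=.
rewrite [in LHS]/index_iota subn0; apply: eq_bigr => i _; by case: (Q i).
Qed.

Lemma count_split (s : seq nat) a b : a <= b ->
  count (fun r => r <= b) s = count (fun r => r <= a) s + count (fun r => (a < r) && (r <= b)) s.
Proof.
move=> hab; elim: s => [|r s IH] //=; rewrite IH.
case: (leqP r a) => h1; case: (leqP r b) => h2 /=; lia.
Qed.

Lemma count_le_nth (s : seq nat) p : sorted ltn s -> p < size s ->
  count (fun r => r <= nth 0 s p) s = p.+1.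
Proof.
elim: s p => [|x s IH] p //= hs hp.
have hall : all (fun y => x < y) s.
  by apply: (order_path_min ltn_trans hs).
have hs' : sorted ltn s by apply: (path_sorted hs).
case: p hp => [|p] hp /=.
- rewrite leqnn; congr (_ + _).
  apply/eqP; rewrite -leqn0 leqNgt -has_count; apply/hasPn => y hy.
  by rewrite -ltnNge; exact: (allP hall y hy).
- have hx : x < nth 0 s p by apply: (allP hall); apply: mem_nth.
  by rewrite (ltnW hx) IH.
Qed.

Lemma rk_ord N (s : 'S_N) (k : 'I_N) : rk s k = (s k).+1.
Proof. by rewrite /rk valK. Qed.

Lemma rk_pn N (s : 'S_N) (k : 'I_N) : ~~ odd N -> rk s (pn k) = (pv s (s k)).+1.
Proof. by move=> hN; rewrite -(pidxE k hN) rk_ord /pv permK. Qed.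

Lemma rk_inj N (s : 'S_N) k1 k2 : k1 < N -> k2 < N -> rk s k1 = rk s k2 -> k1 = k2.
Proof.
move=> h1 h2; have := rk_ord s (Ordinal h1); have := rk_ord s (Ordinal h2); rewrite /= => -> -> [].
by move/val_inj/perm_inj/(congr1 val).
Qed.

Lemma rk_pos N (s : 'S_N) k : k < N -> 0 < rk s k.
Proof. by move=> h; have := rk_ord s (Ordinal h); rewrite /= => ->. Qed.

Lemma sum_to_card N (s : 'S_N) (Q : nat -> nat -> bool) : ~~ odd N ->
 \sum_(0 <= k < N) (Q (rk s k) (rk s (pn k)) : nat) = #|[set v : 'I_N | Q v.+1 (pv s v).+1]|.
Proof.
move=> hN; rewrite big_mkord.
have -> : [set v : 'I_N | Q v.+1 (pv s v).+1] = s @: [set k : 'I_N | Q (s k).+1 (pv s (s k)).+1].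
  apply/setP => v; apply/idP/imsetP.
  - rewrite inE => h; exists ((s^-1)%g v); last by rewrite permKV.
    by rewrite inE permKV.
  - by move=> [k] hk ->; rewrite !inE in hk *.
rewrite card_imset; last exact: perm_inj.
rewrite -sum1dep_card [RHS]big_mkcond /=; apply: eq_bigr => k _.
by rewrite rk_ord rk_pn //; case: (Q _ _).
Qed.

Lemma pn_even p : pn p.*2 = p.*2.+1.
Proof. by rewrite /pn odd_double. Qed.
Lemma pn_odd p : pn p.*2.+1 = p.*2.
Proof. by rewrite /pn /= odd_double. Qed.

Lemma connect_deg m n (s : 'S_(2 * m * n)) (i K : nat) : 1 <= m -> 0 < K -> 0 < i -> i <= n ->
  K <= deg m n (rk s) i ->
  [/\ W m n (rk s) i.-1 + K <= 2 * m * n, (m * i.-1).*2 <= W m n (rk s) i.-1 &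
      exists j, (j <= m) && (s \in Ycls (2 * m * n) (W m n (rk s) i.-1) K m j)].
Proof.
move=> hm hK0 hi hin hK.
set N := 2 * m * n.
set M := m * n.
set x := rk s.
have hN : ~~ odd N by rewrite /N -mulnA mul2n odd_double.
have eN : N = M.*2 by rewrite /N /M -mulnA mul2n.
set a := W m n x i.-1.
set b := W m n x i.
set L := [seq rgt x p | p <- iota 0 M].
set Rs := Rsorted m n x.
have hxo : forall k, k < N -> 0 < x k by move=> k hk; apply: rk_pos.
have hdeg : deg m n x i = minn N b - a.
  have e1 : deg m n x i = \sum_(0 <= k < N) (inI m n x (x k) i : nat).
    rewrite /deg -(big_mkord xpredT (fun k => inI m n x (lft x k) i + inI m n x (rgt x k) i)) eN sum_pairs; apply: eq_bigr => p _.
    rewrite /lft /rgt /minn /maxn; case: ltnP => _ //; by rewrite addnC.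
  have e2 := sum_to_card s (fun y _ => inI m n x y i) hN.
  rewrite e1 /= e2 -card_int2; congr #|_|; apply/setP => v; rewrite !inE /inI.
have hab : a + K <= N /\ a + K <= b.
  move: hK; rewrite hdeg; lia.
case: hab => haN hab.
have hperm : perm_eq Rs L by rewrite /Rs /Rsorted perm_sort.
have hsz : size Rs = M by rewrite (perm_size hperm) size_map size_iota.
have huniq : uniq L.
  rewrite map_inj_in_uniq ?iota_uniq // => p q; rewrite !mem_iota /= !add0n => hp hq.
  rewrite /rgt /maxn.
  have h2p : p.*2.+1 < N by rewrite eN; lia.
  have h2q : q.*2.+1 < N by rewrite eN; lia.
  case: ltnP => _; case: ltnP => _ /rk_inj; lia.
have hsorted : sorted ltn Rs.
  by rewrite ltn_sorted_uniq_leq (perm_uniq hperm) huniq /Rs /Rsorted; exact: (sort_sorted leq_total).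
have hcnt : forall j, j <= n -> count (fun r => r <= W m n x j) Rs = m * j.
  move=> j hj; rewrite /W /Rv.
  case e: (m * j) => [|mj].
  - rewrite (seq.permP hperm); apply/eqP; rewrite -leqn0 leqNgt -has_count; apply/hasPn => r.
    case/mapP => p; rewrite mem_iota add0n => /andP [_ hp] ->.
    rewrite -ltnNge /rgt; apply: (leq_trans (hxo p.*2 _)); first by rewrite eN; lia.
    exact: leq_maxl.
  - rewrite count_le_nth //; rewrite hsz /M; have : m * j <= m * n by apply: leq_mul.
    lia.
have hcab : count (fun r => (a < r) && (r <= b)) L = m.
  rewrite -(seq.permP hperm).
  have hab' : a <= b by lia.
  have := count_split Rs hab'; rewrite /b /a !hcnt //; try lia.
  case: (i) hi hin => // i' _ hin /=.
  rewrite mulnS; lia.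
have hright : #|[set v : 'I_N | inW a K v && (pv s v < v)]| <= m.
  apply: (@leq_trans #|[set v : 'I_N | ((a < v.+1) && (v.+1 <= b)) && ((pv s v).+1 < v.+1)]|).
    apply: subset_leq_card; apply/subsetP => v; rewrite !inE /inW => /andP [/andP [h1 h2] h3].
    apply/andP; split; first (apply/andP; split); lia.
  have e2 := sum_to_card s (fun y z => (a < y) && (y <= b) && (z < y)) hN.
  rewrite /= in e2; rewrite -e2.
  apply: (@leq_trans (count (fun r => (a < r) && (r <= b)) L)); last by rewrite hcab.
  have := sum_pairs (fun k => ((a < rk s k) && (rk s k <= b) && (rk s (pn k) < rk s k) : nat)) M.
  rewrite -eN => ->; rewrite /L count_map -sum_count.
  apply: leq_sum => p _; rewrite pn_even pn_odd /preim /= -/x /rgt /maxn.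
  move: (x p.*2) (x p.*2.+1) => u w.
  case: (ltnP u w) => h; case: (ltnP a u); case: (ltnP a w); case: (leqP u b); case: (leqP w b) => /=; lia.
have hpre : (m * i.-1).*2 <= a.
  have e3 := sum_to_card s (fun y (_ : nat) => y <= a) hN.
  rewrite /= in e3.
  have h1 : #|[set v : 'I_N | v.+1 <= a]| <= a.
    have -> : [set v : 'I_N | v.+1 <= a] = [set v : 'I_N | (0 <= v) && (v < a)] by apply/setP => v; rewrite !inE.
    rewrite card_int2; lia.
  apply: leq_trans h1; rewrite -e3.
  have := sum_pairs (fun k => (rk s k <= a : nat)) M.
  rewrite -eN => ->.
  have : count (fun r => r <= a) L = m * i.-1 by rewrite -(seq.permP hperm) hcnt //; lia.
  rewrite -mul2n => <-; rewrite /L count_map -sum_count big_distrr /=.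
  apply: leq_sum => p _; rewrite /rgt /maxn -/x.
  move: (x p.*2) (x p.*2.+1) => u w.
  case: (ltnP u w) => h; case: (leqP u a); case: (leqP w a) => /=; lia.
split => //.
have hb := leq_trans (cnt_int_bound a K s hN) (leq_mul (leqnn 2) hright).
exists #|cntS a K s|; apply/andP; split; first by lia.
rewrite /Ycls inE eqxx andbT -mul2n; exact: leq_trans (leq_addl _ _) hb.
Qed.

Local Open Scope R_scope.

Lemma ln_le_x (x : R) : (0 < x) -> (ln x <= x).
Proof.
move=> hx; case: (Req_dec (ln x) 0) => h; first by rewrite h; lra.
have := exp_ineq1 (ln x) h; rewrite exp_ln //; lra.
Qed.

Lemma root_le (x y : R) : (0 <= x) -> (0 <= y) -> (x ^ 8 <= y ^ 8) -> (x <= y).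
Proof.
move=> hx hy h; case: (Rle_lt_dec x y) => // hlt.
have h7 : y ^ 7 <= x ^ 7 by apply: pow_incr; lra.
have h7' : 0 < x ^ 7 by apply: pow_lt; lra.
have : y ^ 8 < x ^ 8 by rewrite -!(tech_pow_Rmult _ 7); nra.
lra.
Qed.

Lemma le_div (a b c : R) : 0 < c -> a * c <= b -> a <= b / c.
Proof.
move=> hc h; rewrite /Rdiv.
replace a with ((a * c) * / c); last by field; lra.
apply: Rmult_le_compat_r => //; left; by apply: Rinv_0_lt_compat.
Qed.

Lemma INR_expn (r k : nat) : INR (expn r k) = INR r ^ k.
Proof.
elim: k => [|k IH]; first by rewrite expn0.
by rewrite expnS mult_INR IH.
Qed.

Lemma thr_bounds (n r : nat) : (2 <= n)%N -> (r ^ 8 <= n)%N ->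
  (INR (r ^ 3) <= deg_thr n) /\ (INR (r ^ 7) <= pos_thr n).
Proof.
move=> hn hr.
set x := INR n.
have hx : (2 <= x) by rewrite /x; apply: (le_INR 2); apply/leP.
have hx0 : (0 < x) by lra.
have hlnpos : (0 < ln x) by rewrite -ln_1; apply: ln_increasing; lra.
have hlnx := ln_le_x hx0.
set y := Rpower x (/ 8).
have hy0 : (0 < y) by apply: exp_pos.
have y8 : (y ^ 8 = x).
  rewrite /y -Rpower_pow; last by apply: exp_pos.
  rewrite Rpower_mult; replace (/ 8 * INR 8) with 1; first by rewrite Rpower_1.
  simpl; field.
have hry : (INR r <= y).
  apply: root_le; [apply: pos_INR | lra |].
  rewrite -INR_expn y8 /x; apply: le_INR; by apply/leP.
have hP : forall e : R, (0 < e <= / 8) -> (0 < Rpower (ln x) e <= y).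
  move=> e he; split; first by apply: exp_pos.
  apply: (Rle_trans _ (Rpower x e)); first by apply: Rle_Rpower_l; lra.
  by apply: Rle_Rpower; lra.
have hr0 := pos_INR r.
split.
- have [hp1 hp2] := hP (/ 20) (ltac:(split; lra)).
  rewrite /deg_thr; apply: le_div; first exact: hp1.
  have e4 : (y ^ 4 = sqrt x).
    rewrite /y -Rpower_pow; last by apply: exp_pos.
    rewrite Rpower_mult -Rpower_sqrt //; f_equal; simpl; field.
  rewrite -e4 INR_expn -/x -(tech_pow_Rmult y 3).
  have h1 : (INR r ^ 3 <= y ^ 3) by apply: pow_incr; lra.
  have h2 : (0 <= INR r ^ 3) by apply: pow_le.
  move: (INR r ^ 3) (y ^ 3) (Rpower (ln x) (/ 20)) h1 h2 hp1 hp2 => A B P h1 h2 h3 h4.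
  nra.
- have [hp1 hp2] := hP (/ 39) (ltac:(split; lra)).
  rewrite /pos_thr; apply: le_div; first exact: hp1.
  rewrite -/x INR_expn.
  move: (Rpower (ln x) (/ 39)) hp1 hp2 => P h3 h4.
  rewrite -y8 -(tech_pow_Rmult y 7).
  have h1 : (INR r ^ 7 <= y ^ 7) by apply: pow_incr; lra.
  have h2 : (0 <= INR r ^ 7) by apply: pow_le.
  move: (INR r ^ 7) (y ^ 7) h1 h2 => A B h1 h2.
  nra.
Qed.

Local Close Scope R_scope.
Local Open Scope nat_scope.

Lemma sqrt_bounds a : Nat.sqrt a * Nat.sqrt a <= a < (Nat.sqrt a).+1 * (Nat.sqrt a).+1.
Proof. have [h1 h2] := Nat.sqrt_spec a (Nat.le_0_l a); apply/andP; split; lia. Qed.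

Lemma root8 n : let r := Nat.sqrt (Nat.sqrt (Nat.sqrt n)) in r ^ 8 <= n < r.+1 ^ 8.
Proof.
set p := Nat.sqrt n; set q := Nat.sqrt p; set r := Nat.sqrt q => /=.
have /andP [h1 h2] := sqrt_bounds n.
have /andP [h3 h4] := sqrt_bounds p.
have /andP [h5 h6] := sqrt_bounds q.
rewrite -/p -/q -/r in h1 h2 h3 h4 h5 h6.
apply/andP; split.
- have e : r ^ 8 = (r * r * (r * r)) * (r * r * (r * r)) by rewrite !expnS expn0 muln1 !mulnA.
  rewrite e; apply: (leq_trans _ h1); apply: leq_mul; apply: (leq_trans _ h3); apply: leq_mul; by [].
- have e : r.+1 ^ 8 = (r.+1 * r.+1 * (r.+1 * r.+1)) * (r.+1 * r.+1 * (r.+1 * r.+1)) by rewrite !expnS expn0 muln1 !mulnA.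
  rewrite e; apply: (leq_trans h2); apply: leq_mul; apply: (leq_trans h4); apply: leq_mul; by [].
Qed.

Lemma card_sum (T : finType) (A : {set T}) : #|A| = \sum_(t : T) (t \in A : nat).
Proof. by rewrite -sum1_card big_mkcond /=; apply: eq_bigr => t _; case: (t \in A). Qed.

Lemma union_bound (T I J : finType) (A : {set T}) (P : pred I) (Y : I -> J -> {set T}) :
  (forall t, t \in A -> exists i j, P i /\ t \in Y i j) ->
  #|A| <= \sum_(i | P i) \sum_(j : J) #|Y i j|.
Proof.
move=> H.
have -> : \sum_(i | P i) \sum_(j : J) #|Y i j| = \sum_(t : T) \sum_(i | P i) \sum_(j : J) (t \in Y i j : nat).
  rewrite (eq_bigr (fun i => \sum_(t : T) \sum_(j : J) (t \in Y i j : nat))).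
    by rewrite exchange_big.
  move=> i _; rewrite (eq_bigr (fun j => \sum_(t : T) (t \in Y i j : nat))); last by move=> j _; rewrite card_sum.
  by rewrite exchange_big.
rewrite card_sum; apply: leq_sum => t _.
case ht: (t \in A) => //=.
have [i [j [hi hj]]] := H t ht.
rewrite (bigD1 i) //= (bigD1 j) //= hj.
by rewrite -addnA leq_addr.
Qed.

Lemma Ybound N a K c j R a0 : 0 < R -> ~~ odd N -> a + K <= N -> j <= c -> a0 <= a ->
  #|Ycls N a K c j| * ((K - (c + R) - c.*2) * (a0 - (c + R))) ^ R <= N`! * ((c + R) * N) ^ R.
Proof.
move=> hR hN haK hj ha.
have h := iter_sw c R hN haK j.
apply: (leq_trans _ (leq_trans h _)).
  by apply: leq_mul => //; rewrite leq_exp2r //; apply: leq_mul; lia.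
apply: leq_mul.
  rewrite -card_Sn -cardsT; apply: subset_leq_card; exact: subsetT.
rewrite leq_exp2r //; apply: leq_mul; lia.
Qed.

Lemma exists_nat_ge (y : R) : exists k : nat, Rle y (INR k).
Proof.
have [h1 _] := archimed y.
case: (Z_lt_le_dec (up y) 0) => hz.
- exists 0; have : Rlt (IZR (up y)) 0 by apply: IZR_lt.
  rewrite /=; lra.
- exists (Z.to_nat (up y)); rewrite INR_IZR_INZ Z2Nat.id //; lra.
Qed.

Lemma sum_ord_const n c : \sum_(i < n) c = n * c.
Proof. by rewrite big_const_ord iter_addn_0 mulnC. Qed.

Lemma sum_cond_le n (P : pred 'I_n) c : \sum_(i < n | P i) c <= n * c.
Proof.
rewrite -sum_ord_const [X in _ <= X](bigID P) /=; exact: leq_addr.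
Qed.

Lemma cancel_aux b a5 P f r2 C : 0 < a5 -> b * a5 <= P * f -> P * r2 <= C * a5 -> b * r2 <= C * f.
Proof.
move=> ha h1 h2.
rewrite -(leq_pmul2r ha).
have := leq_mul h1 (leqnn r2); have := leq_mul h2 (leqnn f).
move=> h3 h4.
clear -h3 h4; nia.
Qed.

Lemma num_bound (m r n A0 B0 : nat) : 1 <= m -> 6 * m + 10 <= r -> n < r.+1 ^ 8 ->
  A0 = (r ^ 3 - (m + 5) - m.*2) * ((m * r ^ 7).*2 - (m + 5)) -> B0 = (m + 5) * (2 * m * n) ->
  0 < A0 /\ (2 * m * n).+1 * (m.+1 * B0 ^ 5) * r ^ 2 <= 32 * (513 * m * m.+1 * (512 * m * (m + 5)) ^ 5) * A0 ^ 5.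
Proof.
move=> hm hr hn eA eB.
have hr1 : 1 <= r by lia.
have hr8b : r.+1 ^ 8 <= 256 * r ^ 8.
  have : r.+1 ^ 8 <= (2 * r) ^ 8 by rewrite leq_exp2r //; lia.
  by rewrite expnMn (_ : 2 ^ 8 = 256).
have hx : 1 <= r ^ 8 by rewrite expn_gt0; lia.
have h3 : r <= r ^ 3 by rewrite -{1}(expn1 r) leq_pexp2l.
have h7 : r <= r ^ 7 by rewrite -{1}(expn1 r) leq_pexp2l.
have e10 : r ^ 10 = r ^ 3 * r ^ 7 by rewrite -expnD.
have e40 : (r ^ 8) ^ 5 = r ^ 40 by rewrite -expnM.
have e50 : (r ^ 10) ^ 5 = r ^ 8 * r ^ 40 * r ^ 2 by rewrite -!expnM -!expnD.
move: (r ^ 8) (r.+1 ^ 8) hn hr8b hx e40 e50 => x y hn hy hx e40 e50.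
have h4 : n <= 256 * x by clear -hn hy; lia.
have hN1 : (2 * m * n).+1 <= 513 * m * x.
  have := leq_mul (leqnn (2 * m)) h4; clear -hm hx; nia.
have hB : B0 <= 512 * m * (m + 5) * x.
  rewrite eB; have := leq_mul (leqnn ((m + 5) * (2 * m))) h4; clear; nia.
have hA : r ^ 10 <= 2 * A0.
  rewrite e10 eA.
  move: (r ^ 3) (r ^ 7) h3 h7 => a b ha hb.
  have hf1 : a <= 2 * (a - (m + 5) - m.*2) by clear -ha hr; lia.
  have hf2 : b <= (m * b).*2 - (m + 5) by clear -hb hr hm; nia.
  have := leq_mul hf1 hf2; clear; lia.
split.
  have : 0 < r ^ 10 by rewrite expn_gt0; clear -hr1; lia.
  move: (r ^ 10) hA => z hz; clear -hz; lia.
have hB5 : B0 ^ 5 <= (512 * m * (m + 5)) ^ 5 * r ^ 40.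
  rewrite -e40 -expnMn leq_exp2r //.
have hA5 : (r ^ 10) ^ 5 <= 32 * A0 ^ 5.
  rewrite (_ : 32 = 2 ^ 5) // -expnMn leq_exp2r //.
move: hA5; rewrite e50 => hA5.
move: (r ^ 40) (r ^ 2) (A0 ^ 5) (B0 ^ 5) hB5 hA5 => x40 x2 a5 b5 hB5 hA5.
set c := (512 * m * (m + 5)) ^ 5 in hB5 *.
apply: (@leq_trans (513 * m * x * (m.+1 * (c * x40)) * x2)).
  apply: leq_mul => //; apply: leq_mul => //; exact: leq_mul.
apply: (@leq_trans ((513 * m * m.+1 * c) * (x * x40 * x2))).
  apply: eq_leq; clear; nia.
apply: (@leq_trans ((513 * m * m.+1 * c) * (32 * a5))); first exact: leq_mul (leqnn _) hA5.
apply: eq_leq; clear; nia.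
Qed.

Theorem lemma4 (m : nat) (hm : (1 <= m)%N) :
  forall eps : R, Rlt 0 eps ->
  exists N : nat, forall n : nat, (N <= n)%N -> Rle (prob_bad m n) eps.
Proof.
move=> eps heps.
pose C2 := 513 * m * m.+1 * (512 * m * (m + 5)) ^ 5.
pose C3 := 32 * C2.
have [R1 hR1] : exists R1 : nat, Rle (INR C3) (Rmult eps (INR R1)).
  have [k hk] := exists_nat_ge (INR C3 / eps); exists k.
  have : Rle (Rmult (Rdiv (INR C3) eps) eps) (Rmult (INR k) eps) by apply: Rmult_le_compat_r; lra.
  have -> : Rmult (Rdiv (INR C3) eps) eps = INR C3 by field; lra.
  lra.
pose R0 := maxn (maxn (6 * m + 10) 6) (maxn R1 2).
exists (R0 ^ 8) => n hn.
have /andP [hr8 hr8'] := root8 n.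
set r := Nat.sqrt (Nat.sqrt (Nat.sqrt n)) in hr8 hr8'.
have hrR0 : R0 <= r.
  rewrite leqNgt; apply/negP => hlt.
  have : r.+1 ^ 8 <= R0 ^ 8 by rewrite leq_exp2r.
  lia.
have hr1 : 6 * m + 10 <= r by lia.
have hr2 : 6 <= r by lia.
have hr3 : R1 <= r by lia.
have hn2 : 2 <= n.
  have : 2 ^ 8 <= r ^ 8 by rewrite leq_exp2r //; lia.
  lia.
set K := r ^ 3.
set T := r ^ 7.
have [hK hT] := thr_bounds hn2 hr8.
have hK0 : 0 < K by rewrite expn_gt0; lia.
set N := 2 * m * n.
have hN : ~~ odd N by rewrite /N -mulnA mul2n odd_double.
have hbad : forall s : 'S_N, bad s -> exists i, [&& 0 < i, i <= n, K <= deg m n (rk s) i & T <= i.-1].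
  move=> s /existsP [i /and3P [hi hd hp]].
  exists i; rewrite hi -ltnS ltn_ord /=.
  apply/andP; split.
  - move: hd; rewrite /Rleb; case: Rle_dec => // hle _.
    apply/leP; apply: INR_le; exact: Rle_trans hK hle.
  - move: hp; rewrite /Rleb; case: Rle_dec => // hle _.
    have : Rlt (INR T) (INR i) by apply: (Rle_lt_trans _ _ _ hT); apply: Rnot_le_lt.
    move/INR_lt/ltP; lia.
have hcount : #|[set s : 'S_N | bad s]| <=
   \sum_(a < N.+1 | ((m * T).*2 <= a) && (a + K <= N)) \sum_(j < m.+1) #|Ycls N a K m j|.
  apply: union_bound => s; rewrite inE => /hbad [i /and4P [hi hin hKd hTi]].
  have [h1 h2 [j /andP [hj hY]]] := connect_deg hm hK0 hi hin hKd.
  have ha : W m n (rk s) i.-1 < N.+1 by rewrite ltnS; apply: leq_trans (leq_addr _ _) h1.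
  have hj' : j < m.+1 by lia.
  exists (Ordinal ha), (Ordinal hj'); split => //=.
  apply/andP; split => //.
  apply: leq_trans h2; rewrite -!mul2n; apply: leq_mul => //; exact: leq_mul.
pose A0 := (K - (m + 5) - m.*2) * ((m * T).*2 - (m + 5)).
pose B0 := (m + 5) * N.
have hsum : #|[set s : 'S_N | bad s]| * A0 ^ 5 <= N.+1 * (m.+1 * (N`! * B0 ^ 5)).
  apply: (leq_trans (leq_mul hcount (leqnn _))); rewrite big_distrl /=.
  apply: (@leq_trans (\sum_(a < N.+1 | ((m * T).*2 <= a) && (a + K <= N)) (m.+1 * (N`! * B0 ^ 5)))); last exact: sum_cond_le.
  apply: leq_sum => a /andP [ha1 ha2].
  rewrite big_distrl /= -sum_ord_const; apply: leq_sum => j _.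
  have hj : j <= m by rewrite -ltnS ltn_ord.
  rewrite /A0 /B0.
  have := (Ybound (N:=N) (a:=a) (K:=K) (c:=m) (j:=j) (R:=5) (a0:=(m*T).*2) (erefl true) hN ha2 hj ha1).
  exact.
have [hA0 hnum] := num_bound hm hr1 hr8' (erefl A0) (erefl B0).
have hfin : #|[set s : 'S_N | bad s]| * r ^ 2 <= C3 * N`!.
  have hsum' : #|[set s : 'S_N | bad s]| * A0 ^ 5 <= (N.+1 * (m.+1 * B0 ^ 5)) * N`!.
    apply: (leq_trans hsum); apply: eq_leq.
    move: (N.+1) (m.+1) (N`!) (B0 ^ 5) => p q f b; clear; nia.
  have hA05 : 0 < A0 ^ 5 by rewrite expn_gt0 hA0.
  have := cancel_aux hA05 hsum' hnum.
  by rewrite /C3 /C2.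
rewrite /prob_bad cardsT card_Sn.
have hf0 : Rlt 0 (INR N`!) by apply: lt_0_INR; apply/ltP; exact: fact_gt0.
have hr20 : Rlt 0 (INR (r ^ 2)) by apply: lt_0_INR; apply/ltP; rewrite expn_gt0; lia.
have hR1r : Rle (INR R1) (INR (r ^ 2)).
  apply: le_INR; apply/leP; apply: (leq_trans hr3); rewrite -{1}(expn1 r) leq_pexp2l //; lia.
have hfinR : Rle (Rmult (INR #|[set s : 'S_N | bad s]|) (INR (r ^ 2))) (Rmult (INR C3) (INR N`!)).
  rewrite -!mult_INR; apply: le_INR; exact/leP.
have hmain : Rle (INR #|[set s : 'S_N | bad s]|) (Rmult eps (INR N`!)).
  move: (INR #|[set s : 'S_N | bad s]|) (INR (r ^ 2)) (INR C3) (INR N`!) (INR R1) hf0 hr20 hR1r hfinR hR1 heps.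
  move=> b r2 c f r1 h1 h2 h3 h4 h5 h6.
  have h7 : Rle c (Rmult eps r2) by apply: (Rle_trans _ _ _ h5); apply: Rmult_le_compat_l; lra.
  have h8 : Rle (Rmult b r2) (Rmult (Rmult eps f) r2).
    apply: (Rle_trans _ _ _ h4); have := Rmult_le_compat_r f _ _ (Rlt_le _ _ h1) h7; lra.
  apply: (Rmult_le_reg_r r2) => //.
rewrite /Rdiv; apply: (Rmult_le_reg_r (INR N`!)) => //.
rewrite Rmult_assoc Rinv_l; last by apply: not_eq_sym; apply: Rlt_not_eq.
rewrite Rmult_1_r; exact: hmain.
Qed.
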